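(* Over directed graphs, there are first-order (FO) node classifiers expressible by ACR-GNNs which are not expressible in $\text{C}^2$. In particular, $\varphi_{\mathit{Lin}}(x)$ is such a classifier.
   Context: A directed graph is $G=(V,E,\lambda)$ with finite $V$, loop-free $E\subseteq V\times V$ and $\lambda:V\to\{0,1\}^d$, viewed as a first-order structure with unary predicates $P_1,\dots,P_d$ and binary predicate $E$. A node classifier is a formula with one free variable (or a function assigning a truth value to each node). $\text{C}^2$ is the two-variable fragment of first-order logic extended with counting quantifiers $\exists_k$. An ACR-GNN layer for directed graphs is a tuple $(\overleftarrow{\mathsf{agg}}, \overrightarrow{\mathsf{agg}}, \mathsf{comb}, \mathsf{read})$ updating labels by $\lambda'(v)=\mathsf{comb}\big(\lambda(v), \overleftarrow{\mathsf{agg}}(\{\!\{\lambda(w)\}\!\}_{w\in\overleftarrow{N}_G(v)}), \overrightarrow{\mathsf{agg}}(\{\!\{\lambda(w)\}\!\}_{w\in\overrightarrow{N}_G(v)}), \mathsf{read}(\{\!\{\lambda(w)\}\!\}_{w\in V})\big)$, where $\{\!\{\cdot\}\!\}$ denotes a multiset and $\overleftarrow{N}_G(v),\overrightarrow{N}_G(v)$ are in- and out-neighbourhoods; an ACR-GNN classifier is a fixed number of layers followed by a classification function. $\varphi_{\mathit{Lin}}(x)$ accepts a node of $G$ iff the edge relation of $G$ is a strict linear order. *)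

(* Defs.v *)
From HB Require Import structures.
From mathcomp Require Import all_boot all_order all_algebra.
From mathcomp Require Import reals.

Set Implicit Arguments.
Unset Strict Implicit.
Unset Printing Implicit Defensive.

Import GRing.Theory Num.Theory.

Record graph (d : nat) := Graph {
  vert :> finType;
  edge : rel vert;
  edge_irr : irreflexive edge;
  lab : vert -> {ffun 'I_d -> bool}
}.

Definition node_classifier (d : nat) := forall G : graph d, vert G -> bool.

Definition strict_linear_order (T : finType) (e : rel T) : bool :=
  [&& [forall u, ~~ e u u],
      [forall u, forall w, forall z, e u w && e w z ==> e u z] &
      [forall u, forall w, (u != w) ==> e u w || e w u]].

Definition phi_Lin (d : nat) : node_classifier d :=
  fun G _ => strict_linear_order (@edge d G).
Arguments phi_Lin d : clear implicits.

Inductive fo_form (d : nat) :=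
  | FPred of 'I_d & nat
  | FEdge of nat & nat
  | FEq of nat & nat
  | FNeg of fo_form d
  | FAnd of fo_form d & fo_form d
  | FEx of nat & fo_form d.

Definition upd (T : Type) (a : nat -> T) (n : nat) (u : T) : nat -> T :=
  fun m => if m == n then u else a m.

Fixpoint fo_sat d (G : graph d) (a : nat -> vert G) (f : fo_form d) : bool :=
  match f with
  | FPred i n => lab (a n) i
  | FEdge n m => edge (a n) (a m)
  | FEq n m => a n == a m
  | FNeg g => ~~ fo_sat a g
  | FAnd g h => fo_sat a g && fo_sat a h
  | FEx n g => [exists u, fo_sat (upd a n u) g]
  end.

Fixpoint fo_free d (n : nat) (f : fo_form d) : bool :=
  match f with
  | FPred _ m => m == n
  | FEdge m k | FEq m k => (m == n) || (k == n)
  | FNeg g => fo_free n g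
  | FAnd g h => fo_free n g || fo_free n h
  | FEx m g => (m != n) && fo_free n g
  end.

(* c is FO-expressible: some FO formula with (at most) the free variable 0 (= x) *)
Definition fo_expressible d (c : node_classifier d) : Prop :=
  exists f : fo_form d, (forall n, n != 0 -> ~~ fo_free n f) /\
    forall (G : graph d) (v : vert G), fo_sat (fun _ => v) f = c G v.

(* C^2: two variables (false = x, true = y) and counting quantifiers   *)
Inductive c2_form (d : nat) :=
  | CPred of 'I_d & bool
  | CEdge of bool & bool
  | CEq of bool & bool
  | CNeg of c2_form d
  | CAnd of c2_form d & c2_form d
  | CExists of nat & bool & c2_form d.  (* CExists k z f : "exists at least k z. f" *)

Definition upd2 (T : Type) (a : bool -> T) (z : bool) (u : T) : bool -> T :=
  fun z' => if z' == z then u else a z'.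

Fixpoint c2_sat d (G : graph d) (a : bool -> vert G) (f : c2_form d) : bool :=
  match f with
  | CPred i z => lab (a z) i
  | CEdge z1 z2 => edge (a z1) (a z2)
  | CEq z1 z2 => a z1 == a z2
  | CNeg g => ~~ c2_sat a g
  | CAnd g h => c2_sat a g && c2_sat a h
  | CExists k z g => k <= #|[pred u | c2_sat (upd2 a z u) g]|
  end.

Fixpoint c2_free d (z : bool) (f : c2_form d) : bool :=
  match f with
  | CPred _ z' => z' == z
  | CEdge z1 z2 | CEq z1 z2 => (z1 == z) || (z2 == z)
  | CNeg g => c2_free z g
  | CAnd g h => c2_free z g || c2_free z h
  | CExists _ z' g => (z' != z) && c2_free z g
  end.

Definition c2_expressible d (c : node_classifier d) : Prop :=
  exists f : c2_form d, ~~ c2_free true f /\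
    forall (G : graph d) (v : vert G), c2_sat (fun _ => v) f = c G v.

(* Multisets are represented by sequences, and every function taking a *)
(* multiset is required to be invariant under permutation.             *)
Section ACR.
Variable R : realType.

Record acr_layer (din dout : nat) := ACRLayer {
  dain : nat; daout : nat; dread : nat;
  agg_in : seq 'rV[R]_din -> 'rV[R]_dain;
  agg_out : seq 'rV[R]_din -> 'rV[R]_daout;
  comb : 'rV[R]_din -> 'rV[R]_dain -> 'rV[R]_daout -> 'rV[R]_dread -> 'rV[R]_dout;
  read : seq 'rV[R]_din -> 'rV[R]_dread;
  agg_in_perm : forall s t, perm_eq s t -> agg_in s = agg_in t;
  agg_out_perm : forall s t, perm_eq s t -> agg_out s = agg_out t;
  read_perm : forall s t, perm_eq s t -> read s = read t
}.

Definition in_nbhd d (G : graph d) (v : vert G) : seq (vert G) :=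
  [seq w <- enum (vert G) | edge w v].
Definition out_nbhd d (G : graph d) (v : vert G) : seq (vert G) :=
  [seq w <- enum (vert G) | edge v w].

Definition apply_layer din dout (L : acr_layer din dout) d (G : graph d)
    (lam : vert G -> 'rV[R]_din) : vert G -> 'rV[R]_dout :=
  fun v => @comb _ _ L (lam v)
              (@agg_in _ _ L [seq lam w | w <- in_nbhd v])
              (@agg_out _ _ L [seq lam w | w <- out_nbhd v])
              (@read _ _ L [seq lam w | w <- enum (vert G)]).

Inductive acr_gnn : nat -> Type :=
  | GClass (n : nat) of ('rV[R]_n -> bool) : acr_gnn n
  | GLayer (n m : nat) of acr_layer n m & acr_gnn m : acr_gnn n.

Fixpoint run_gnn n (N : acr_gnn n) d (G : graph d) : (vert G -> 'rV[R]_n) -> vert G -> bool :=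
  match N with
  | GClass _ cls => fun lam v => cls (lam v)
  | GLayer _ _ L N' => fun lam => @run_gnn _ N' d G (apply_layer L lam)
  end.

Definition init_label d (G : graph d) (v : vert G) : 'rV[R]_d :=
  (\row_i (lab v i)%:R)%R.

Definition acr_classifier d (N : acr_gnn d) : node_classifier d :=
  fun G v => @run_gnn d N d G (@init_label d G) v.

Definition acr_expressible d (c : node_classifier d) : Prop :=
  exists N : acr_gnn d, forall (G : graph d) (v : vert G), @acr_classifier d N G v = c G v.

End ACR.

(* Main.v *)
Require Import Defs.
From mathcomp Require Import all_boot all_order all_algebra.
From mathcomp Require Import reals.
From mathcomp Require Import zify.
Set Implicit Arguments.
Unset Strict Implicit.
Unset Printing Implicit Defensive.

Fixpoint c2_depth d (f : c2_form d) : nat :=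
  match f with
  | CNeg g => c2_depth g
  | CAnd g h => maxn (c2_depth g) (c2_depth h)
  | CExists _ _ g => (c2_depth g).+1
  | _ => 0
  end.

Fixpoint c2_thr d (f : c2_form d) : nat :=
  match f with
  | CNeg g => c2_thr g
  | CAnd g h => maxn (c2_thr g) (c2_thr h)
  | CExists k _ g => maxn k (c2_thr g)
  | _ => 0
  end.

Lemma minn_sum K x y : minn K (x + y) = minn K (minn K x + minn K y).
Proof. lia. Qed.

Lemma count_transfer (T1 T2 C : finType) (K k : nat) (c1 : T1 -> C) (c2 : T2 -> C)
  (P1 : pred T1) (P2 : pred T2) :
  0 < K -> k <= K ->
  (forall a b, c1 a = c2 b -> P1 a = P2 b) ->
  (forall c, minn K #|[pred a | c1 a == c]| = minn K #|[pred b | c2 b == c]|) ->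
  (k <= #|P1|) = (k <= #|P2|).
Proof.
move=> K0 kK Hab Hc.
have E1 : #|P1| = \sum_(c : C) #|[pred a | P1 a && (c1 a == c)]|.
  rewrite -sum1_card (partition_big c1 predT) //=.
  by apply: eq_bigr => c _; rewrite sum1_card.
have E2 : #|P2| = \sum_(c : C) #|[pred a | P2 a && (c2 a == c)]|.
  rewrite -sum1_card (partition_big c2 predT) //=.
  by apply: eq_bigr => c _; rewrite sum1_card.
have Hm : forall c, minn K #|[pred a | P1 a && (c1 a == c)]| = minn K #|[pred a | P2 a && (c2 a == c)]|.
  move=> c; have Hcc := Hc c.
  case: (pickP [pred a | c1 a == c]) => [a0 /eqP a0c|n1].
    case: (pickP [pred b | c2 b == c]) => [b0 /eqP b0c|n2].
      have e1 : forall a, c1 a == c -> P1 a = P2 b0.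
        by move=> a /eqP ac; apply: Hab; rewrite ac b0c.
      have e2 : forall b, c2 b == c -> P2 b = P2 b0.
        by move=> b /eqP bc; rewrite -(Hab a0 b) ?a0c ?bc // (Hab a0 b0) ?a0c ?b0c.
      case: (boolP (P2 b0)) => hb.
        rewrite (eq_card (B := [pred a | c1 a == c])); last first.
          by move=> a; rewrite !inE; case: (boolP (c1 a == c)) => h; rewrite ?andbF ?andbT ?e1.
        rewrite [in X in _ = X](eq_card (B := [pred a | c2 a == c])) //.
        by move=> a; rewrite !inE; case: (boolP (c2 a == c)) => h; rewrite ?andbF ?andbT ?e2.
      rewrite (eq_card0 (A := [pred a | P1 a && (c1 a == c)])); last first.
        by move=> a; rewrite !inE; case: (boolP (c1 a == c)) => h; rewrite ?andbF ?andbT ?e1 ?(negbTE hb).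
      rewrite (eq_card0 (A := [pred a | P2 a && (c2 a == c)])) //.
      by move=> a; rewrite !inE; case: (boolP (c2 a == c)) => h; rewrite ?andbF ?andbT ?e2 ?(negbTE hb).
    rewrite (eq_card0 n2) in Hcc.
    have : 0 < #|[pred a | c1 a == c]| by apply/card_gt0P; exists a0; rewrite inE a0c.
    lia.
  rewrite (eq_card0 n1) in Hcc.
  have n2 : #|[pred b | c2 b == c]| = 0 by move: Hcc; lia.
  rewrite (eq_card0 (A := [pred a | P1 a && (c1 a == c)])); last first.
    by move=> a; rewrite !inE; have := n1 a => /= ->; rewrite andbF.
  have /eqP := n2; rewrite -/(pred0b _) => /pred0P n2'.
  rewrite (eq_card0 (A := [pred a | P2 a && (c2 a == c)])) //.
  by move=> a; rewrite !inE; have := n2' a => /= ->; rewrite andbF.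
have : minn K #|P1| = minn K #|P2|.
  rewrite E1 E2.
  elim/big_rec2: _ => // c y1 y2 _ IH.
  by rewrite minn_sum IH Hm -minn_sum.
lia.
Qed.

Lemma c2_transfer d (G H : graph d) (K : nat) (C : finType)
  (Z : nat -> (bool -> G) -> (bool -> H) -> Prop) :
  0 < K ->
  (forall q g h, Z q g h ->
     (forall z i, lab (g z) i = lab (h z) i) /\
     (forall z1 z2, (g z1 == g z2) = (h z1 == h z2)) /\
     (forall z1 z2, edge (g z1) (g z2) = edge (h z1) (h z2))) ->
  (forall q g h z, Z q.+1 g h -> exists (cG : G -> C) (cH : H -> C),
     (forall a b, cG a = cH b -> Z q (upd2 g z a) (upd2 h z b)) /\
     (forall c, minn K #|[pred a | cG a == c]| = minn K #|[pred b | cH b == c]|)) ->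
  forall f q g h, c2_depth f <= q -> c2_thr f <= K -> Z q g h ->
    c2_sat g f = c2_sat h f.
Proof.
move=> K0 HA HS; elim=> [i z|z1 z2|z1 z2|f IH|f1 IH1 f2 IH2|k z f IH] q g h /= Hd Ht HZ.
- by have [H1 _] := HA _ _ _ HZ; rewrite H1.
- by have [_ [_ H3]] := HA _ _ _ HZ; rewrite H3.
- by have [_ [H2 _]] := HA _ _ _ HZ; rewrite H2.
- by rewrite (IH q g h).
- rewrite geq_max in Hd; rewrite geq_max in Ht.
  case/andP: Hd => ? ?; case/andP: Ht => ? ?.
  by rewrite (IH1 q g h) ?(IH2 q g h).
- case: q Hd HZ => // q Hd HZ.
  rewrite geq_max in Ht; case/andP: Ht => kK Ht.
  have [cG [cH [Hab Hc]]] := HS _ _ _ z HZ.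
  apply: (@count_transfer _ _ _ K k cG cH (fun u => c2_sat (upd2 g z u) f)
            (fun u => c2_sat (upd2 h z u) f)) => // a b /Hab Hz.
  exact: (IH q).
Qed.

Definition eG (N : nat) : rel 'I_N := fun i j => (i < j)%N.
Definition eH (P N : nat) : rel 'I_N := fun i j =>
  if ((i == P :> nat) && (j == P.+2 :> nat)) || ((i == P.+2 :> nat) && (j == P :> nat))
  then (j < i)%N else (i < j)%N.

Lemma eG_irr N : irreflexive (@eG N). Proof. by move=> i; rewrite /eG ltnn. Qed.
Lemma eH_irr P N : irreflexive (@eH P N).
Proof. move=> i; rewrite /eH; case: ifP; lia. Qed.

Lemma eG_tour N (a x : 'I_N) : eG a x = (a != x) && ~~ eG x a.
Proof. rewrite /eG -val_eqE /=; lia. Qed.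
Lemma eH_tour P N (a x : 'I_N) : eH P a x = (a != x) && ~~ eH P x a.
Proof. rewrite /eH -val_eqE /=; case: ifP; case: ifP; lia. Qed.

Lemma eH_eGr P N (u a : 'I_N) : (a != P :> nat) -> (a != P.+2 :> nat) -> eH P u a = eG u a.
Proof. rewrite /eH /eG; case: ifP => //; lia. Qed.
Lemma eH_eGl P N (u a : 'I_N) : (u != P :> nat) -> (u != P.+2 :> nat) -> eH P u a = eG u a.
Proof. rewrite /eH /eG; case: ifP => //; lia. Qed.

Definition cl (B N : nat) (a : 'I_N) : option 'I_N :=
  if (B <= a) && (a < N - B) then None else Some a.

Lemma cl_mono (Bs Bl N : nat) (a b : 'I_N) : Bs <= Bl -> cl Bl a = cl Bl b -> cl Bs a = cl Bs b.
Proof.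
rewrite /cl => le; case: ifP => ha; case: ifP => hb //.
- move=> _; case: ifP; case: ifP => //; lia.
- by move=> [<-].
Qed.

Lemma count_big (N B S : nat) (x : 'I_N) (e : bool) :
  B + S <= x -> x + S + B < N ->
  S <= #|[pred a : 'I_N | (a != x) && (((x < a)%N) == e) && ((B <= a) && (a < N - B))]|.
Proof.
move=> h1 h2.
pose f := fun i : 'I_S => insubd x (if e then x + 1 + i else x - 1 - i) : 'I_N.
have fv : forall i : 'I_S, val (f i) = (if e then x + 1 + i else x - 1 - i).
  move=> i; rewrite /f insubdK //; have := ltn_ord i; case: (e); rewrite /=; lia.
have finj : injective f.
  move=> i j /(congr1 val); rewrite !fv => h; apply/val_inj => /=; move: h.
  have := ltn_ord i; have := ltn_ord j; case: (e); lia.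
rewrite -[S]card_ord -(card_imset predT finj).
apply: subset_leq_card; apply/subsetP => y /imsetP [i _ ->].
rewrite inE -val_eqE !fv; have := ltn_ord i; case: (e) => /=; lia.
Qed.

Lemma card_eq1 (T : finType) (x : T) (P : pred T) :
  #|[pred a | (a == x) && P a]| = P x.
Proof.
case: (boolP (P x)) => hx.
  rewrite (eq_card (B := pred1 x)) ?card1 // => a; rewrite !inE.
  by case: eqP => // ->; rewrite hx.
rewrite eq_card0 // => a; rewrite !inE.
by case: eqP => // ->; rewrite (negbTE hx).
Qed.

Lemma card_two (N P : nat) (x : 'I_N) : P.+2 < N ->
  #|[pred b : 'I_N | (b == P :> nat) || (b == P.+2 :> nat)]| <= 2.
Proof.
move=> hP.
pose f := fun i : 'I_2 => insubd x (P + 2 * i) : 'I_N.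
rewrite -[2]card_ord.
apply: (leq_trans _ (leq_imset_card f predT)).
apply: subset_leq_card; apply/subsetP => y; rewrite inE => /orP [] /eqP hy.
  apply/imsetP; exists ord0 => //; apply/val_inj; rewrite /f insubdK /=; lia.
apply/imsetP; exists (@Ordinal 2 1 isT) => //; apply/val_inj; rewrite /f insubdK /=; lia.
Qed.

Lemma count_bigH (N B S P : nat) (x : 'I_N) (e : bool) :
  B + S <= x -> x + S + B < N -> P.+2 < N ->
  S - 2 <= #|[pred a : 'I_N | (a != x) && ((eH P x a) == e) && ((B <= a) && (a < N - B))]|.
Proof.
move=> h1 h2 hP.
set A := [pred a : 'I_N | (a != x) && (((x < a)%N) == e) && ((B <= a) && (a < N - B))].
set T := [pred b : 'I_N | (b == P :> nat) || (b == P.+2 :> nat)].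
have hA : S <= #|A| := count_big e h1 h2.
have hT := card_two x hP.
have hI : #|[predI A & T]| <= 2.
  apply: leq_trans hT; apply: subset_leq_card; apply/subsetP => y.
  by rewrite !inE => /andP [].
have hD : #|[predD A & T]| <= #|[pred a : 'I_N | (a != x) && ((eH P x a) == e) && ((B <= a) && (a < N - B))]|.
  apply: subset_leq_card; apply/subsetP => y; rewrite !inE /eH -!val_eqE /=.
  clear hA hT hI A T; case: (e); rewrite ?eqb_id ?eqbF_neg; case: ifP; lia.
move: (cardID T A) => E.
have h3 : S <= 2 + #|[predD A & T]|.
  by rewrite -E in hA; exact: leq_trans hA (leq_add hI (leqnn _)).
move: hD h3; clear; lia.
Qed.

Definition Zr (N P Q S : nat) (q : nat) (g h : bool -> 'I_N) : Prop :=
  q <= Q /\ (forall z, cl (q*S) (g z) = cl (q*S) (h z)) /\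
  (forall z1 z2, (g z1 == g z2) = (h z1 == h z2)) /\
  (forall z1 z2, eG (g z1) (g z2) = eH P (h z1) (h z2)).

Arguments Zr : clear implicits.

Lemma Zr_step N P Q S q g h z : 3 <= S -> Q * S <= P -> P.+2 + Q * S < N ->
  Zr N P Q S q.+1 g h ->
  exists (cG : 'I_N -> bool * bool * option 'I_N) (cH : 'I_N -> bool * bool * option 'I_N),
   (forall a b, cG a = cH b -> Zr N P Q S q (upd2 g z a) (upd2 h z b)) /\
   (forall c, minn (S-2) #|[pred a | cG a == c]| = minn (S-2) #|[pred b | cH b == c]|).
Proof.
move=> S3 QP PN [hq [hcl [heq hed]]].
have hqS : q.+1 * S <= Q * S := leq_mul hq (leqnn S).
have eB : q.+1 * S = q * S + S by rewrite mulSn addnC.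
rewrite eB in hcl hqS.
exists (fun a => (a == g (~~ z), eG (g (~~ z)) a, cl (q*S) a)),
       (fun b => (b == h (~~ z), eH P (h (~~ z)) b, cl (q*S) b)).
have Hn : forall z0, (z0 == z) = false -> z0 = ~~ z by case; case: (z).
split.
  move=> a b [ea ee ec].
  split; first lia.
  split.
    move=> z0; rewrite /upd2; case: ifP => _; first exact: ec.
    by apply: (cl_mono _ (hcl z0)); lia.
  split.
    move=> z1 z2; rewrite /upd2; case: ifP => h1; case: ifP => h2.
    - by rewrite !eqxx.
    - by rewrite (Hn _ h2).
    - by rewrite (Hn _ h1) eq_sym ea eq_sym.
    - exact: heq.
  move=> z1 z2; rewrite /upd2; case: ifP => h1; case: ifP => h2.
  - by rewrite eG_irr eH_irr.
  - by rewrite (Hn _ h2) eG_tour eH_tour ea ee.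
  - by rewrite (Hn _ h1).
  - exact: hed.
move=> [[e1 e2] c3].
have hx := hcl (~~ z).
case hm: ((q * S + S <= g (~~z)) && (g (~~z) < N - (q * S + S))).
- have hm' : (q * S + S <= h (~~z)) && (h (~~z) < N - (q * S + S)).
    by move: hx; rewrite /cl hm; case: ifP.
  have hxq : cl (q * S) (g (~~ z)) = cl (q * S) (h (~~ z)).
    by apply: (cl_mono _ hx); lia.
  case: e1.
  + rewrite (eq_card (B := [pred a | (a == g (~~z)) && ((eG (g (~~z)) a == e2) && (cl (q*S) a == c3))])); last first.
      by move=> a; rewrite !inE !xpair_eqE eqb_id andbA.
    rewrite [in RHS](eq_card (B := [pred a | (a == h (~~z)) && ((eH P (h (~~z)) a == e2) && (cl (q*S) a == c3))])); last first.
      by move=> a; rewrite !inE !xpair_eqE eqb_id andbA.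
    by rewrite !card_eq1 eG_irr eH_irr hxq.
  + case: c3 => [p'|].
    * congr minn; apply: eq_card => a; rewrite !inE !xpair_eqE /cl.
      case: ifP => ha /=; first by rewrite !andbF.
      rewrite eH_eGr; last 2 first.
      - by apply/negP => /eqP ea; move: ha; rewrite ea; lia.
      - by apply/negP => /eqP ea; move: ha; rewrite ea; lia.
      have -> : (a == g (~~ z)) = (a == h (~~ z)) by rewrite -!val_eqE /=; lia.
      by have -> : eG (g (~~ z)) a = eG (h (~~ z)) a by rewrite /eG; lia.
    * have h1 : S - 2 <= #|[pred a | (a == g (~~z), eG (g (~~z)) a, cl (q*S) a) == (false, e2, None)]|.
        rewrite (eq_card (B := [pred a : 'I_N | (a != g (~~z)) && (((g (~~z) < a)%N) == e2) && ((q * S <= a) && (a < N - q * S))])).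
          by apply: leq_trans (count_big (S := S) e2 _ _); lia.
        move=> a; rewrite !inE !xpair_eqE eqbF_neg /cl /eG.
        by case: ifP.
      have h2 : S - 2 <= #|[pred a | (a == h (~~z), eH P (h (~~z)) a, cl (q*S) a) == (false, e2, None)]|.
        rewrite (eq_card (B := [pred a : 'I_N | (a != h (~~z)) && ((eH P (h (~~z)) a) == e2) && ((q * S <= a) && (a < N - q * S))])).
          by apply: count_bigH; lia.
        move=> a; rewrite !inE !xpair_eqE eqbF_neg /cl.
        by case: ifP.
      by rewrite (minn_idPl h1) (minn_idPl h2).
- have ex : g (~~ z) = h (~~ z).
    by move: hx; rewrite /cl hm; case: ifP => // _ [].
  have hnt : (g (~~ z) != P :> nat) && (g (~~ z) != P.+2 :> nat) by lia.
  case/andP: hnt => n1 n2.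
  congr minn; apply: eq_card => a; rewrite !inE -ex eH_eGl //.
Qed.

Lemma slo_G N : strict_linear_order (@eG N).
Proof.
apply/and3P; split; apply/forallP => u.
- by rewrite /eG ltnn.
- apply/forallP => w; apply/forallP => z; apply/implyP; rewrite /eG; lia.
- apply/forallP => w; apply/implyP; rewrite /eG -val_eqE /=; lia.
Qed.

Lemma slo_H P N : P.+2 < N -> ~~ strict_linear_order (@eH P N).
Proof.
move=> hP; apply/negP => /and3P [_ /forallP H _].
have h0 : P < N by lia.
have h1 : P.+1 < N by lia.
move: (H (Ordinal h0)) => /forallP /(_ (Ordinal h1)) /forallP /(_ (Ordinal hP)) /implyP.
rewrite /eH /= !eqxx /=.
have a1 : (P.+1 == P.+2) = false by lia.
have a2 : (P == P.+2) = false by lia.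
have a3 : (P.+1 == P) = false by lia.
rewrite a1 a2 a3 /= !ltnSn ltnNge leqW //; lia.
Qed.

Lemma not_c2 d : ~ c2_expressible (phi_Lin d).
Proof.
case=> f [_ Hf].
pose Q := c2_depth f; pose K := maxn 1 (c2_thr f); pose S := K + 2.
pose P := Q * S; pose N := P + 3 + Q * S.
pose G := @Graph d 'I_N (@eG N) (@eG_irr N) (fun _ => [ffun _ => false]).
pose H := @Graph d 'I_N (@eH P N) (@eH_irr P N) (fun _ => [ffun _ => false]).
have hN : 0 < N by rewrite /N; lia.
pose x0 : 'I_N := Ordinal hN.
have E : @c2_sat d G (fun _ => x0) f = @c2_sat d H (fun _ => x0) f.
  refine (@c2_transfer d G H K (bool * bool * option (ordinal N))%type (Zr N P Q S) _ _ _ f Q (fun _ => x0) (fun _ => x0) _ _ _).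
  - by rewrite /K; lia.
  - move=> q g h [_ [_ [he hd]]]; split; last by split.
    by move=> z i; rewrite /= !ffunE.
  - move=> q g h z HZ.
    have := @Zr_step N P Q S q g h z.
    have -> : S - 2 = K by rewrite /S addnK.
    apply; rewrite /S /P /N //; lia.
  - by [].
  - by rewrite /K; lia.
  - split => //; split => //; split => //.
    by move=> z1 z2; rewrite eG_irr eH_irr.
rewrite !Hf /phi_Lin /= slo_G in E.
have := slo_H (P := P) (N := N) ltac:(rewrite /N; lia).
by rewrite -E.
Qed.

Definition ind (T : finType) (e : rel T) (v : T) := #|[pred w | e w v]|.

Lemma size_nbhd d (G : graph d) (v : G) : size (in_nbhd v) = ind (@edge d G) v.
Proof. by rewrite /in_nbhd size_filter /ind cardE enumT /enum_mem size_filter. Qed.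

Lemma slo_ind (T : finType) (e : rel T) : strict_linear_order e ->
  (forall x v, e x v -> ind e x < ind e v) /\ injective (ind e).
Proof.
case/and3P => /forallP irr /forallP tr /forallP tot.
have lt : forall x v, e x v -> ind e x < ind e v.
  move=> x v exv; apply: proper_card; apply/properP; split.
    apply/subsetP => w; rewrite !inE => ewx.
    by have := tr w => /forallP /(_ x) /forallP /(_ v) /implyP; apply; rewrite ewx.
  by exists x; rewrite !inE // (negbTE (irr x)).
split => // u w hu; apply/eqP; apply/negP => /negP neq.
have := tot u => /forallP /(_ w) /implyP /(_ neq) /orP [] /lt; lia.
Qed.

Lemma ind_slo (T : finType) (e : rel T) : irreflexive e -> injective (ind e) ->
  (forall x v, e x v -> ind e x < ind e v) -> strict_linear_order e.
Proof.
move=> irr inj lt.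
have key : forall u w, ind e u < ind e w -> e u w.
  move=> u w huw.
  pose s := map (ind e) (enum [pred x | e x w]).
  have us : uniq s by rewrite map_inj_uniq ?enum_uniq.
  have sub : {subset s <= iota 0 (ind e w)}.
    move=> i /mapP [x]; rewrite mem_enum inE => exw ->.
    by rewrite mem_iota add0n lt.
  have sz : size (iota 0 (ind e w)) <= size s by rewrite size_iota size_map -cardE.
  have [_ /(_ (ind e u))] := uniq_min_size us sub sz.
  rewrite mem_iota add0n huw => /mapP [x].
  by rewrite mem_enum inE => exw /inj ->.
apply/and3P; split; apply/forallP => u.
- by rewrite irr.
- apply/forallP => w; apply/forallP => z; apply/implyP => /andP [/lt h1 /lt h2].
  apply: key; lia.
- apply/forallP => w; apply/implyP => neq.
  have : ind e u != ind e w by apply: contra neq => /eqP /inj ->.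
  rewrite neq_ltn => /orP [] /key ->; by rewrite ?orbT.
Qed.

Definition fo_lin d : fo_form d :=
  FAnd (FNeg (FEx 1 (FEdge d 1 1)))
   (FAnd (FNeg (FEx 1 (FEx 2 (FEx 3 (FAnd (FAnd (FEdge d 1 2) (FEdge d 2 3)) (FNeg (FEdge d 1 3)))))))
     (FNeg (FEx 1 (FEx 2 (FAnd (FNeg (FEq d 1 2)) (FAnd (FNeg (FEdge d 1 2)) (FNeg (FEdge d 2 1)))))))).

Lemma fo_part d : fo_expressible (phi_Lin d).
Proof.
exists (fo_lin d); split.
  by move=> n _; case: n => [|[|[|[|n]]]].
move=> G v; rewrite /phi_Lin /strict_linear_order /=.
congr (_ && (_ && _)).
- rewrite negb_exists; apply: eq_forallb => u; by rewrite /upd.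
- rewrite negb_exists; apply: eq_forallb => u; rewrite negb_exists.
  apply: eq_forallb => w; rewrite negb_exists; apply: eq_forallb => z.
  rewrite /upd /=. by case: (edge u w); case: (edge w z); case: (edge u z).
- rewrite negb_exists; apply: eq_forallb => u; rewrite negb_exists.
  apply: eq_forallb => w; rewrite /upd /=.
  by case: (u == w); case: (edge u w); case: (edge w u).
Qed.

Section ACRPart.
Import Order.TTheory GRing.Theory Num.Theory.
Local Open Scope ring_scope.

Lemma perm1 (R : realType) n : forall s t : seq 'rV[R]_n, perm_eq s t ->
  (\row_(j < 1) ((size s)%:R : R)) = \row_(j < 1) (size t)%:R.
Proof. by move=> s t /perm_size ->. Qed.
Lemma perm0 (R : realType) n m : forall s t : seq 'rV[R]_n, perm_eq s t ->
  (0 : 'rV[R]_m) = 0.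
Proof. by []. Qed.
Lemma perm_max (R : realType) : forall s t : seq 'rV[R]_1, perm_eq s t ->
  (\row_(j < 1) (\big[Num.max/-1]_(r <- s) r 0 0)) = \row_(j < 1) (\big[Num.max/-1]_(r <- t) r 0 0).
Proof. by move=> s t h; rewrite (perm_big _ h). Qed.
Lemma perm_un (R : realType) : forall s t : seq 'rV[R]_1, perm_eq s t ->
  (\row_(j < 1) ((uniq s)%:R : R)) = \row_(j < 1) (uniq t)%:R.
Proof. by move=> s t /perm_uniq ->. Qed.
Lemma perm_al (R : realType) : forall s t : seq 'rV[R]_1, perm_eq s t ->
  (\row_(j < 1) ((all (fun r : 'rV[R]_1 => r 0 0 == 1) s)%:R : R)) =
  \row_(j < 1) (all (fun r : 'rV[R]_1 => r 0 0 == 1) t)%:R.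
Proof. by move=> s t /perm_all ->. Qed.

Definition L1 (R : realType) (d : nat) : acr_layer R d 1 :=
  @ACRLayer R d 1 1 1 1
    (fun s => \row_(j < 1) (size s)%:R)
    (fun _ => 0)
    (fun x a b c => a)
    (fun _ => 0)
    (@perm1 R d) (@perm0 R d 1) (@perm0 R d 1).

Definition L2 (R : realType) : acr_layer R 1 1 :=
  @ACRLayer R 1 1 1 1 1
    (fun s => \row_(j < 1) (\big[Num.max/-1]_(r <- s) r 0 0))
    (fun _ => 0)
    (fun x a b c => \row_(j < 1) ((a 0 0 < x 0 0) && (c 0 0 == 1))%:R)
    (fun s => \row_(j < 1) (uniq s)%:R)
    (@perm_max R) (@perm0 R 1 1) (@perm_un R).

Definition L3 (R : realType) : acr_layer R 1 1 :=
  @ACRLayer R 1 1 1 1 1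
    (fun _ => 0)
    (fun _ => 0)
    (fun x a b c => c)
    (fun s => \row_(j < 1) (all (fun r : 'rV[R]_1 => r 0 0 == 1) s)%:R)
    (@perm0 R 1 1) (@perm0 R 1 1) (@perm_al R).

Definition gnn (R : realType) (d : nat) : acr_gnn R d :=
  GLayer (L1 R d) (GLayer (L2 R) (GLayer (L3 R) (GClass (fun r : 'rV[R]_1 => r 0 0 == 1)))).

Lemma bool1 (R : realType) (b : bool) : ((b%:R : R) == 1) = b.
Proof. by case: b; rewrite ?eqxx // eq_sym oner_eq0. Qed.

Lemma max_lt (R : realType) (T : Type) (f : T -> nat) (s : seq T) (c : nat) :
  (\big[Num.max/-1]_(r <- [seq (\row_(j < 1) ((f w)%:R : R)) | w <- s]) r 0 0 < c%:R)
  = all (fun w => (f w < c)%N) s.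
Proof.
elim: s => [|w s IH].
  by rewrite big_nil /=; apply: (lt_le_trans (y := 0)); rewrite ?ltrN10 ?ler0n.
by rewrite /= big_cons gt_max IH mxE ltr_nat.
Qed.

Lemma mapE (R : realType) d (G : graph d) (s : seq G) :
  [seq \row_(j < 1) ((size [seq @init_label R d G w1 | w1 <- in_nbhd w0])%:R : R) | w0 <- s]
  = [seq \row_(j < 1) ((ind (@edge d G) w0)%:R : R) | w0 <- s].
Proof. by apply: eq_map => w; rewrite size_map size_nbhd. Qed.

Lemma uniqE (R : realType) (T : eqType) (f : T -> nat) (s : seq T) :
  uniq [seq \row_(j < 1) ((f w)%:R : R) | w <- s] = uniq (map f s).
Proof.
have -> : [seq \row_(j < 1) ((f w)%:R : R) | w <- s] = map (fun n : nat => \row_(j < 1) (n%:R : R)) (map f s).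
  by rewrite -map_comp.
rewrite map_inj_uniq //.
by move=> m n /(congr1 (fun r : 'rV[R]_1 => r 0 0)); rewrite !mxE => /eqP; rewrite eqr_nat => /eqP.
Qed.

Lemma acr_part (R : realType) d : acr_expressible R (phi_Lin d).
Proof.
exists (gnn R d) => G v.
rewrite /acr_classifier /= /apply_layer /= !mxE bool1 all_map.
rewrite (eq_all (a2 := fun u => (all (fun w => (ind (@edge d G) w < ind (@edge d G) u)%N) (in_nbhd u))
           && uniq (map (ind (@edge d G)) (enum G)))); last first.
  move=> u /=; rewrite !mxE bool1 !mapE size_map size_nbhd max_lt uniqE bool1.
  by [].
rewrite /phi_Lin; apply/idP/idP.
- move/allP => H.
  have /andP [_ U] := H v (mem_enum _ v).
  apply: ind_slo; first exact: edge_irr.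
    by apply/injectiveP.
  move=> x u exu.
  have /andP [/allP A _] := H u (mem_enum _ u).
  by apply: A; rewrite mem_filter exu mem_enum.
- move/slo_ind => [lt inj]; apply/allP => u _; apply/andP; split.
    by apply/allP => w; rewrite mem_filter => /andP [e _]; apply: lt.
  by apply/injectiveP.
Qed.

End ACRPart.

Theorem corollary1 (R : realType) (d : nat) :
  fo_expressible (phi_Lin d) /\ acr_expressible R (phi_Lin d) /\
  ~ c2_expressible (phi_Lin d).
Proof.
split; first exact: fo_part.
split; first exact: acr_part.
exact: not_c2.
Qed.
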